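(* Let $G_{\max}=(V,E_{\max})$ be a finite, simple, connected, undirected graph on $N$ nodes and let $\lambda',\mu',\gamma'>0$. Consider the Sum-Dependent Dynamic Bond Percolation (SUD-DBP) process $\{A(t),t\ge 0\}$: the continuous-time Markov process whose state space $\mathcal{A}$ is the set of all $2^{|E_{\max}|}$ subsets $E(\mathbf{A})\subseteq E_{\max}$ of closed edges (equivalently, the symmetric $0/1$ adjacency matrices $\mathbf{A}$ supported on $E_{\max}$), in which only one edge changes state per transition, each closed edge $(a,b)$ opens at rate $\mu'$, and each open edge $(a,b)\in E_{\max}$ closes at rate $\lambda'\gamma'^{\,k_a+k_b}$, where $k_i=\sum_{j=1}^N\mathbf{A}_{ij}$ is the number of closed edges incident to node $i$ in the current state $\mathbf{A}$. Then $\{A(t)\}$ is a reversible Markov process and its equilibrium distribution is \[ \pi(\mathbf{A})=\frac{1}{Z}\left(\frac{\lambda'}{\mu'}\right)^{|E(\mathbf{A})|}\gamma'^{\,g(E(\mathbf{A}))},\qquad \mathbf{A}\in\mathcal{A}, \] where $Z=\sum_{\mathbf{A}\in\mathcal{A}}(\lambda'/\mu')^{|E(\mathbf{A})|}\gamma'^{\,g(E(\mathbf{A}))}$, $|E(\mathbf{A})|=\frac{\mathbf{1}^T\mathbf{A}\mathbf{1}}{2}$ is the number of closed edges, and $g(E(\mathbf{A}))$ is the number of $P_3$ subgraphs (paths on 3 vertices) formed by the closed edges, given by \[ g(E(\mathbf{A}))=\sum_{i=1}^N\sum_{j>i}(\mathbf{A}^2)_{i,j}=\sum_{i=1}^N\binom{k_i}{2}.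 \]
   Context: An edge is ''closed'' if it is present in the current network state and ''open'' otherwise; the network state is the adjacency matrix $\mathbf{A}$ of the graph $(V,E(\mathbf{A}))$ of closed edges. $\mathbf{1}=[1,\dots,1]^T$. A $P_3$ subgraph is a path with 3 distinct vertices and 2 edges. A stationary Markov process is reversible if it is statistically the same run forward and backward in time (equivalently, its equilibrium distribution satisfies detailed balance $\pi(j)q(j,k)=\pi(k)q(k,j)$ for all states $j,k$, with $q$ the transition rates). *)

(* Defs.v *)
From HB Require Import structures.
From mathcomp Require Import all_boot all_order all_algebra.
Set Implicit Arguments. Unset Strict Implicit. Unset Printing Implicit Defensive.
Import Order.TTheory GRing.Theory Num.Theory.
Local Open Scope ring_scope.

Definition simple_edges (V : finType) (Emax : {set {set V}}) : Prop :=
  forall e, e \in Emax -> #|e| = 2%N.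

Definition gadj (V : finType) (Emax : {set {set V}}) : rel V :=
  fun x y => [set x; y] \in Emax.

Definition connected_graph (V : finType) (Emax : {set {set V}}) : Prop :=
  forall x y : V, connect (gadj Emax) x y.

(* A network state is a set S of closed edges, S \subset Emax. *)
Definition deg (V : finType) (S : {set {set V}}) (a : V) : nat :=
  #|[set e in S | a \in e]|.

(* number of P_3 subgraphs formed by the closed edges: unordered pairs of
   distinct closed edges sharing exactly one vertex (3 vertices in total). *)
Definition P3count (V : finType) (S : {set {set V}}) : nat :=
  #|[set p : {set {set V}} | (p \subset S) && (#|p| == 2%N) &&
       (#|\bigcup_(e in p) e| == 3%N)]|.

Definition sud_rate (R : realFieldType) (lam mu gam : R) (V : finType)
    (Emax : {set {set V}}) (S S' : {set {set V}}) : R :=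
  \sum_(e in Emax | (e \notin S) && (S' == e |: S))
      lam * gam ^+ (\sum_(a in e) deg S a)
  + \sum_(e in Emax | (e \in S) && (S' == S :\ e)) mu.

Definition sud_weight (R : realFieldType) (lam mu gam : R) (V : finType)
    (S : {set {set V}}) : R :=
  (lam / mu) ^+ #|S| * gam ^+ P3count S.

Definition sud_Z (R : realFieldType) (lam mu gam : R) (V : finType)
    (Emax : {set {set V}}) : R :=
  \sum_(S : {set {set V}} | S \subset Emax) sud_weight lam mu gam S.

Definition sud_pi (R : realFieldType) (lam mu gam : R) (V : finType)
    (Emax : {set {set V}}) (S : {set {set V}}) : R :=
  sud_weight lam mu gam S / sud_Z lam mu gam Emax.

Definition stationary (R : realFieldType) (V : finType) (Emax : {set {set V}})
    (q : {set {set V}} -> {set {set V}} -> R) (p : {set {set V}} -> R) : Prop :=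
  forall S : {set {set V}}, S \subset Emax ->
    \sum_(S' : {set {set V}} | S' \subset Emax) p S' * q S' S
    = p S * \sum_(S' : {set {set V}} | S' \subset Emax) q S S'.

Definition is_distribution (R : realFieldType) (V : finType)
    (Emax : {set {set V}}) (p : {set {set V}} -> R) : Prop :=
  (forall S : {set {set V}}, S \subset Emax -> 0 <= p S) /\
  \sum_(S : {set {set V}} | S \subset Emax) p S = 1.

Definition detailed_balance (R : realFieldType) (V : finType)
    (Emax : {set {set V}}) (q : {set {set V}} -> {set {set V}} -> R)
    (p : {set {set V}} -> R) : Prop :=
  forall S S' : {set {set V}}, S \subset Emax -> S' \subset Emax -> p S * q S S' = p S' * q S' S.

(* Main.v *)
Require Import Defs.
From HB Require Import structures.
From mathcomp Require Import all_boot all_order all_algebra.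
From mathcomp Require Import ring lra.
Import Order.TTheory GRing.Theory Num.Theory.

Lemma card_sum (T : finType) (P : pred T) : #|[set x | P x]| = \sum_x (P x : nat).
Proof. rewrite -sum1_card big_mkcond; apply: eq_bigr => x _; rewrite inE; by case: (P x). Qed.

Lemma key_pair (V : finType) (e f : {set V}) : #|e| = 2 -> #|f| = 2 -> e != f ->
  (#|e :|: f| == 3 : nat) = #|e :&: f|.
Proof.
move=> he hf nef.
have hx : #|e :&: f| <= 1.
  have [le eqc] := subset_leqif_cards (subsetIl e f).
  rewrite leqNgt; apply/negP => h2.
  have ex : #|e :&: f| == #|e| by rewrite eqn_leq le he h2.
  move: ex; rewrite eqc => /eqP /setIidPl ef.
  by move: nef; rewrite eqEcard ef he hf.
rewrite cardsU he hf; move: hx; by case: #|e :&: f| => [|[|]].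
Qed.

Lemma p3_deg (V : finType) (S : {set {set V}}) : (forall e, e \in S -> #|e| = 2) ->
  P3count S = \sum_a 'C(deg S a, 2).
Proof.
move=> hS; rewrite /P3count.
pose star a := [set e in S | a \in e].
have key : forall p : {set {set V}}, p \subset S -> #|p| == 2 ->
   (#|\bigcup_(e in p) e| == 3 : nat) = #|[set a | p \subset star a]|.
  move=> p pS p2; case/(@cards2P _ p): p2 => [e [f [nef pe]]]; subst p.
  have eS : e \in S by apply: (subsetP pS); rewrite !inE eqxx.
  have fS : f \in S by apply: (subsetP pS); rewrite !inE eqxx orbT.
  have -> : \bigcup_(x in [set e; f]) x = e :|: f.
    apply/setP => a; apply/bigcupP/setUP.
      by case=> x; rewrite !inE => /orP [] /eqP -> ; [left|right].
    by case=> h; [exists e|exists f] => //; rewrite !inE eqxx ?orbT.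
  have -> : [set a | [set e; f] \subset star a] = e :&: f.
    by apply/setP => a; rewrite !inE subUset !sub1set !inE eS fS.
  exact: key_pair (hS _ eS) (hS _ fS) nef.
transitivity (\sum_(p : {set {set V}} | (p \subset S) && (#|p| == 2)) #|[set a | p \subset star a]|).
  rewrite -sum1_card big_mkcond [RHS]big_mkcond /=; apply: eq_bigr => p _.
  rewrite inE; case pS: (p \subset S); case p2: (#|p| == 2) => //=.
  by rewrite -key //; case: (_ == 3).
transitivity (\sum_(p : {set {set V}} | (p \subset S) && (#|p| == 2)) \sum_a (p \subset star a : nat)).
  by apply: eq_bigr => p _; rewrite (@card_sum V (fun a => p \subset star a)).
rewrite exchange_big /=; apply: eq_bigr => a _.
rewrite /deg -/(star a) -cards_draws (@card_sum _ (fun p : {set {set V}} => (p \subset star a) && (#|p| == 2))) [LHS]big_mkcond /=.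
apply: eq_bigr => p _.
have sa : star a \subset S by apply/subsetP => e; rewrite inE => /andP[].
case: (boolP (p \subset star a)) => h; rewrite ?(subset_trans h sa);
 by case: (#|p| == 2); case: (p \subset S).
Qed.

Lemma deg_add (V : finType) (S : {set {set V}}) (e : {set V}) a : e \notin S ->
  deg (e |: S) a = (deg S a + (a \in e))%N.
Proof.
move=> eS; rewrite /deg; case ae: (a \in e).
  have -> : [set x in e |: S | a \in x] = e |: [set x in S | a \in x].
    apply/setP => x; rewrite !inE; case: (eqVneq x e) => [->|] //=; by rewrite ae.
  by rewrite cardsU1 inE (negbTE eS) addn1.
have -> : [set x in e |: S | a \in x] = [set x in S | a \in x].
  apply/setP => x; rewrite !inE; case: (eqVneq x e) => [->|] //=; by rewrite ae andbF.
by rewrite addn0.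
Qed.

Lemma P3_add {V : finType} (S : {set {set V}}) (e : {set V}) :
  (forall f, f \in S -> #|f| = 2) -> #|e| = 2 -> e \notin S ->
  P3count (e |: S) = (P3count S + \sum_(a in e) deg S a)%N.
Proof.
move=> hS he eS.
rewrite !p3_deg //; last by move=> f; rewrite in_setU1 => /orP [/eqP ->|/hS].
rewrite [X in (_ + X)%N]big_mkcond /= -big_split /=; apply: eq_bigr => a _.
rewrite deg_add //; case: (a \in e); last by rewrite !addn0.
by rewrite addn1 binS bin1.
Qed.

Section Rates.
Variables (R : realFieldType) (lam mu gam : R) (V : finType) (Emax : {set {set V}}).
Local Open Scope ring_scope.
Notation q := (sud_rate lam mu gam Emax).
Notation w := (sud_weight lam mu gam).

Lemma q_add (S : {set {set V}}) (e : {set V}) : e \in Emax -> e \notin S ->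
  q S (e |: S) = lam * gam ^+ (\sum_(a in e) deg S a).
Proof.
move=> eE eS; rewrite /sud_rate.
rewrite [X in _ + X]big1 ?addr0; last first.
  move=> f /andP[_ /andP[fS /eqP h]].
  have : f \in e |: S by rewrite in_setU1 fS orbT.
  by rewrite h setD11.
rewrite (big_pred1 e) // => f /=.
case: (eqVneq f e) => [->|nfe]; first by rewrite eE eS eqxx.
case fE: (f \in Emax) => //=; case fS: (f \in S) => //=.
apply/negP => /eqP h.
have : f \in e |: S by rewrite h setU11.
by rewrite in_setU1 (negbTE nfe) fS.
Qed.

Lemma q_del (S : {set {set V}}) (e : {set V}) : S \subset Emax -> e \in S -> q S (S :\ e) = mu.
Proof.
move=> SE eS; rewrite /sud_rate.
rewrite big1 ?add0r; last first.
  move=> f /andP[_ /andP[fS /eqP h]].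
  have : f \in S :\ e by rewrite h setU11.
  by rewrite in_setD1 (negbTE fS) andbF.
rewrite (big_pred1 e) // => f /=.
case: (eqVneq f e) => [->|nfe]; first by rewrite (subsetP SE _ eS) eS eqxx.
case fE: (f \in Emax) => //=; case fS: (f \in S) => //=.
apply/negbTE/negP => /eqP h.
have : e \in S :\ f by rewrite in_setD1 eq_sym nfe eS.
by rewrite -h setD11.
Qed.

Lemma q_zero (S S' : {set {set V}}) : (forall e, e \in Emax -> e \notin S -> S' != e |: S) ->
  (forall e, e \in S -> S' != S :\ e) -> q S S' = 0.
Proof.
move=> h1 h2; rewrite /sud_rate big1 ?add0r.
  by rewrite big1 // => f /andP[_ /andP[fS /eqP h]]; move: (h2 f fS); rewrite h eqxx.
by move=> f /andP[fE /andP[fS /eqP h]]; move: (h1 f fE fS); rewrite h eqxx.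
Qed.

Hypothesis (lam0 : 0 < lam) (mu0 : 0 < mu) (gam0 : 0 < gam).

Lemma q_ge0 (S S' : {set {set V}}) : 0 <= q S S'.
Proof.
rewrite /sud_rate addr_ge0 // sumr_ge0 // => f _.
  by rewrite mulr_ge0 ?ltW // exprn_gt0.
exact: ltW.
Qed.

Lemma w_gt0 (S : {set {set V}}) : 0 < w S.
Proof. by rewrite /sud_weight mulr_gt0 // exprn_gt0 // divr_gt0. Qed.

Hypothesis (simple : simple_edges Emax).

Lemma wdb_add (S : {set {set V}}) (e : {set V}) : S \subset Emax -> e \in Emax -> e \notin S ->
  w S * q S (e |: S) = w (e |: S) * q (e |: S) S.
Proof.
move=> SE eE eS.
have hq : q (e |: S) S = mu.
  have h := @q_del (e |: S) e _ (setU11 e S); rewrite setU1K // in h; apply: h.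
  by rewrite subUset sub1set eE SE.
rewrite q_add // hq.
have hS' : forall f, f \in S -> #|f| = 2%N by move=> f fS; apply: simple; apply: (subsetP SE).
rewrite /sud_weight (@P3_add _ S e hS' (simple _ eE) eS).
rewrite cardsU1 eS add1n exprS exprD.
have mu_neq0 : mu != 0 by rewrite gt_eqF.
move: ((lam / mu) ^+ #|S|) (gam ^+ P3count S) (gam ^+ (\sum_(a in e) deg S a)) => A B C.
rewrite -{1}(divfK mu_neq0 lam); move: (lam / mu) => x; ring.
Qed.

Lemma wdb (S S' : {set {set V}}) : S \subset Emax -> S' \subset Emax -> w S * q S S' = w S' * q S' S.
Proof.
move=> SE S'E.
case: (boolP [exists e, (e \in Emax) && (e \notin S) && (S' == e |: S)]).
  by case/existsP => e /andP[/andP[eE eS] /eqP ->]; apply: wdb_add.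
move=> n1.
case: (boolP [exists e, (e \in Emax) && (e \notin S') && (S == e |: S')]).
  by case/existsP => e /andP[/andP[eE eS] /eqP ->]; apply/esym/wdb_add.
move=> n2.
have z1 : forall A B : {set {set V}}, ~~ [exists e, (e \in Emax) && (e \notin A) && (B == e |: A)] ->
   ~~ [exists e, (e \in Emax) && (e \notin B) && (A == e |: B)] -> A \subset Emax -> q A B = 0.
  move=> A B m1 m2 AE; apply: q_zero.
    by move=> e eE eA; apply: contra m1 => h; apply/existsP; exists e; rewrite eE eA.
  move=> e eA; apply: contra m2 => /eqP h; apply/existsP; exists e.
  by rewrite h (subsetP AE _ eA) setD11 setD1K ?eqxx.
by rewrite (z1 S S') // (z1 S' S) // !mulr0.
Qed.

End Rates.

Local Open Scope ring_scope.

Theorem theorem2 (R : realFieldType) (V : finType) (Emax : {set {set V}})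
    (lam mu gam : R) :
  simple_edges Emax -> connected_graph Emax ->
  0 < lam -> 0 < mu -> 0 < gam ->
  let q := sud_rate lam mu gam Emax in
  let pi := sud_pi lam mu gam Emax in
  [/\ (* g(E(A)) = sum_i binom(k_i, 2) *)
      (forall S : {set {set V}}, S \subset Emax ->
         P3count S = (\sum_(a : V) 'C(deg S a, 2))%N),
      (* pi is a probability distribution with positive mass everywhere *)
      is_distribution Emax pi /\ (forall S : {set {set V}}, S \subset Emax -> 0 < pi S),
      (* pi is an equilibrium distribution *)
      stationary Emax q pi,
      (* it is the unique equilibrium distribution *)
      (forall p, is_distribution Emax p -> stationary Emax q p ->
         forall S : {set {set V}}, S \subset Emax -> p S = pi S)
    & (* reversibility: detailed balance *)
      detailed_balance Emax q pi].
Proof.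
move=> simple _ lam0 mu0 gam0 q pi.
pose w := @sud_weight R lam mu gam V.
pose Z := sud_Z lam mu gam Emax.
have wpos : forall S : {set {set V}}, 0 < w S by move=> S; apply: w_gt0.
have Zpos : 0 < Z.
  rewrite /Z /sud_Z (bigD1 set0) ?sub0set //=.
  have h1 := wpos set0.
  have h2 : 0 <= \sum_(S : {set {set V}} | (S \subset Emax) && (S != set0)) w S.
    by apply: sumr_ge0 => S _; apply: ltW.
  rewrite -/w; lra.
have Zn0 : Z != 0 by rewrite gt_eqF.
have piE : forall S : {set {set V}}, pi S = w S / Z by [].
have db : detailed_balance Emax q pi.
  move=> S S' SE S'E; rewrite !piE !(mulrAC _ Z^-1) /q.
  by rewrite (@wdb R lam mu gam V Emax mu0 simple S S' SE S'E).
have st : stationary Emax q pi.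
  move=> S SE; rewrite mulr_sumr; apply: eq_bigr => S' S'E.
  by rewrite db.
have qge0 : forall S S' : {set {set V}}, 0 <= q S S' by move=> S S'; apply: q_ge0.
split => //.
- move=> S SE; apply: p3_deg => e eS; apply: simple; exact: (subsetP SE).
- split; last by move=> S _; rewrite piE divr_gt0.
  split; first by move=> S _; rewrite piE ltW // divr_gt0.
  under eq_bigr do rewrite piE.
  by rewrite -mulr_suml -/Z mulfV.
move=> p [p0 p1] stp.
pose r (S : {set {set V}}) := p S / w S.
have pE : forall S : {set {set V}}, p S = r S * w S by move=> S; rewrite /r divfK // gt_eqF.
case: (@arg_maxP _ R _ set0 (fun S => S \subset Emax) r (sub0set _)) => M ME Mmax.
set rM := r M in Mmax *.
have rMmax : forall T : {set {set V}}, T \subset Emax -> r T <= rM by move=> T TE; exact: Mmax T TE.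
have prop : forall S S' : {set {set V}}, S \subset Emax -> S' \subset Emax -> r S = rM -> 0 < q S S' -> r S' = rM.
  move=> S S' SE S'E rS qpos.
  have h := stp S SE.
  have e0 : \sum_(T : {set {set V}} | T \subset Emax) q S T * (r S - r T) = 0.
    apply: (@mulfI _ (w S)); first by rewrite gt_eqF.
    rewrite mulr0 mulr_sumr.
    transitivity (p S * \sum_(T : {set {set V}} | T \subset Emax) q S T - \sum_(T : {set {set V}} | T \subset Emax) p T * q T S);
      last by rewrite h subrr.
    rewrite mulr_sumr -sumrB; apply: eq_bigr => T TE.
    have hw : w T * q T S = w S * q S T := @wdb R lam mu gam V Emax mu0 simple T S TE SE.
    rewrite (pE T) (pE S).
    have -> : r T * w T * q T S = r T * (w S * q S T) by rewrite -hw mulrA.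
    ring.
  have h0 : forall T : {set {set V}}, T \subset Emax -> 0 <= q S T * (r S - r T).
    by move=> T TE; rewrite mulr_ge0 // subr_ge0 rS rMmax.
  have := psumr_eq0P h0 e0 S'E.
  move/eqP; rewrite mulf_eq0 subr_eq0 => /orP [/eqP q0|/eqP <-//].
  by move: qpos; rewrite q0 ltxx.
have down : forall n (S : {set {set V}}), S \subset Emax -> #|S| = n -> r S = rM -> r set0 = rM.
  elim=> [|n IH] S SE cS rS.
    by move/cards0_eq: cS => <-.
  have /card_gt0P [e eS] : (0 < #|S|)%N by rewrite cS.
  have SeE : S :\ e \subset Emax by apply: subset_trans (subD1set S e) SE.
  apply: (IH (S :\ e)) => //.
    by move: cS; rewrite (cardsD1 e S) eS add1n => -[].
  apply: (prop S) => //.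
  by rewrite /q (@q_del R lam mu gam V Emax S e SE eS).
have r0 : r set0 = rM by apply: (down _ M ME erefl).
have up : forall n (T : {set {set V}}), T \subset Emax -> #|T| = n -> r T = rM.
  elim=> [|n IH] T TE cT.
    by move/cards0_eq: cT => ->.
  have /card_gt0P [e eT] : (0 < #|T|)%N by rewrite cT.
  have TeE : T :\ e \subset Emax by apply: subset_trans (subD1set T e) TE.
  have rTe : r (T :\ e) = rM.
    apply: (IH (T :\ e)) => //.
    by move: cT; rewrite (cardsD1 e T) eT add1n => -[].
  rewrite -(setD1K eT); apply: (prop (T :\ e)) => //; first by rewrite setD1K.
  have eE : e \in Emax by apply: (subsetP TE).
  rewrite /q (@q_add R lam mu gam V Emax (T :\ e) e eE) ?setD11 //.
  by rewrite mulr_gt0 // exprn_gt0.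
have hsum : rM * Z = 1.
  rewrite -p1 /Z /sud_Z mulr_sumr; apply: eq_bigr => T TE.
  by rewrite (pE T) (up _ T TE erefl).
move=> S SE; rewrite piE (pE S) (up _ S SE erefl).
have -> : rM = Z^-1 by rewrite -[rM]mulr1 -(mulfV Zn0) mulrA hsum mul1r.
by rewrite mulrC.
Qed.
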